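(* Let $\varepsilon>0$, $\Omega\subset\mathbb{R}^2$ bounded open, $u\in\mathcal{SF}_\varepsilon(\Omega)$, $R\in\mathcal{R}_\varepsilon(u)$, and let $S_R(u)\subseteq\mathbb{S}^2$ be an admissible interpolation surface for $u$ in $R$. Then there exists $u_R\in\mathbb{S}^2$ such that $u_R\in S_R(u)$ and $u_R\cdot z\ge0$ for every $z\in S_R(u)$.
   Context: $\mathcal{L}=\{ae_1+b\hat e_2:a,b\in\mathbb{Z}\}$ with $e_1=(1,0)$, $\hat e_2=\frac12(1,\sqrt3)$, $\mathcal{L}_\varepsilon=\varepsilon\mathcal{L}$, $\mathcal{L}_\varepsilon(R)=\mathcal{L}_\varepsilon\cap R$; $\mathcal{T}_\varepsilon$ is the set of closed triangles with vertices in $\mathcal{L}_\varepsilon$ pairwise at distance $\varepsilon$; $\mathcal{E}_\varepsilon$ the set of segments $[i,j]$, $i,j\in\mathcal{L}_\varepsilon$, $|i-j|=\varepsilon$. $n=(0,0,1)$; $\mathcal{SF}_\varepsilon(\Omega)$ is the set of $u:\mathcal{L}_\varepsilon\to\mathbb{S}^2$ with $u=n$ on $\mathcal{L}_\varepsilon\setminus\Omega$. $\mathcal{N}_\varepsilon(u)=\{[i,j]\in\mathcal{E}_\varepsilon:u(i)=-u(j)\}$. Two triangles of $\mathcal{T}_\varepsilon$ are neighbours if their intersection is an edge in $\mathcal{N}_\varepsilon(u)$, connected if joined by a finite chain of neighbours; $\mathcal{R}_\varepsilon(u)$ is the set of unions of pairwise connected triangles maximal under inclusion. $\mathrm{cone}_R(u)=\{\sum_{w\in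 u(\mathcal{L}_\varepsilon(R))}\lambda_ww:\lambda_w\ge0\}$. $S_R(u)$ is an admissible interpolation surface for $u$ in $R$ if: when $\mathrm{cone}_R(u)$ is not a linear subspace of $\mathbb{R}^3$, $S_R(u)=\{v/|v|:v=\sum_w\lambda_ww,\ \lambda_w\ge0,\ \sum_w\lambda_w>0\}$; when it is a linear subspace, $S_R(u)=\{v/|v|:v=\sum_w\lambda_ww+\tau h,\ \lambda_w,\tau\ge0,\ \sum_w\lambda_w+\tau>0\}$ for some $h\in\mathbb{S}^2$ orthogonal to $\mathrm{cone}_R(u)$ (sums over $w\in u(\mathcal{L}_\varepsilon(R))$). *)

(* Defs.v *)
From Stdlib Require Import Reals Lra List Relations.
Open Scope R_scope.

Definition pt2 := (R * R)%type.
Definition vec3 := (R * R * R)%type.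

Definition dist2 (x y : pt2) : R :=
  sqrt ((fst x - fst y) ^ 2 + (snd x - snd y) ^ 2).

Definition dot3 (v w : vec3) : R :=
  let '(v1, v2, v3) := v in let '(w1, w2, w3) := w in v1 * w1 + v2 * w2 + v3 * w3.
Definition norm3 (v : vec3) : R := sqrt (dot3 v v).
Definition add3 (v w : vec3) : vec3 :=
  let '(v1, v2, v3) := v in let '(w1, w2, w3) := w in (v1 + w1, v2 + w2, v3 + w3).
Definition scal3 (a : R) (v : vec3) : vec3 :=
  let '(v1, v2, v3) := v in (a * v1, a * v2, a * v3).
Definition opp3 (v : vec3) : vec3 := scal3 (-1) v.
Definition zero3 : vec3 := (0, 0, 0).

Definition on_sphere (v : vec3) : Prop := norm3 v = 1.

Definition nvec : vec3 := (0, 0, 1).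

Definition in_lattice (eps : R) (x : pt2) : Prop :=
  exists a b : Z,
    x = (eps * (IZR a * 1 + IZR b * (1 / 2)), eps * (IZR a * 0 + IZR b * (sqrt 3 / 2))).

Definition set_eq (A B : pt2 -> Prop) : Prop := forall x, A x <-> B x.
Definition subset2 (A B : pt2 -> Prop) : Prop := forall x, A x -> B x.

Definition conv3 (p q r : pt2) : pt2 -> Prop := fun x =>
  exists l1 l2 l3 : R, 0 <= l1 /\ 0 <= l2 /\ 0 <= l3 /\ l1 + l2 + l3 = 1 /\
    x = (l1 * fst p + l2 * fst q + l3 * fst r, l1 * snd p + l2 * snd q + l3 * snd r).

Definition segment (i j : pt2) : pt2 -> Prop := fun x =>
  exists t : R, 0 <= t <= 1 /\
    x = ((1 - t) * fst i + t * fst j, (1 - t) * snd i + t * snd j).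

Definition is_triangle (eps : R) (T : pt2 -> Prop) : Prop :=
  exists p q r : pt2, in_lattice eps p /\ in_lattice eps q /\ in_lattice eps r /\
    dist2 p q = eps /\ dist2 q r = eps /\ dist2 p r = eps /\ set_eq T (conv3 p q r).

(** * Spin fields: SF_eps(Omega).  A spin field is a map on the plane of which only
      the values on lattice points matter. *)
Definition spin_field (eps : R) (Omega : pt2 -> Prop) (u : pt2 -> vec3) : Prop :=
  forall x, in_lattice eps x -> on_sphere (u x) /\ (~ Omega x -> u x = nvec).

Definition in_N (eps : R) (u : pt2 -> vec3) (i j : pt2) : Prop :=
  in_lattice eps i /\ in_lattice eps j /\ dist2 i j = eps /\ u i = opp3 (u j).

Definition neighbours (eps : R) (u : pt2 -> vec3) (T1 T2 : pt2 -> Prop) : Prop :=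
  is_triangle eps T1 /\ is_triangle eps T2 /\
  exists i j, in_N eps u i j /\ set_eq (fun x => T1 x /\ T2 x) (segment i j).

Definition connected_tri (eps : R) (u : pt2 -> vec3) : relation (pt2 -> Prop) :=
  clos_trans _ (neighbours eps u).

Definition pc_union (eps : R) (u : pt2 -> vec3) (Rset : pt2 -> Prop) : Prop :=
  exists F : (pt2 -> Prop) -> Prop,
    (forall T, F T -> is_triangle eps T) /\
    (forall T1 T2, F T1 -> F T2 -> T1 <> T2 -> connected_tri eps u T1 T2) /\
    set_eq Rset (fun x => exists T, F T /\ T x).

Definition is_region (eps : R) (u : pt2 -> vec3) (Rset : pt2 -> Prop) : Prop :=
  pc_union eps u Rset /\
  forall R', pc_union eps u R' -> subset2 Rset R' -> subset2 R' Rset.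

Definition values (eps : R) (u : pt2 -> vec3) (Rset : pt2 -> Prop) : vec3 -> Prop :=
  fun w => exists x, in_lattice eps x /\ Rset x /\ w = u x.

Definition comb (l : list (R * vec3)) : vec3 :=
  fold_right (fun p acc => add3 (scal3 (fst p) (snd p)) acc) zero3 l.
Definition coef_sum (l : list (R * vec3)) : R :=
  fold_right (fun p acc => fst p + acc) 0 l.
Definition admissible_list (W : vec3 -> Prop) (l : list (R * vec3)) : Prop :=
  Forall (fun p => 0 <= fst p /\ W (snd p)) l.

Definition cone (eps : R) (u : pt2 -> vec3) (Rset : pt2 -> Prop) : vec3 -> Prop :=
  fun v => exists l, admissible_list (values eps u Rset) l /\ v = comb l.

Definition is_subspace (C : vec3 -> Prop) : Prop :=
  C zero3 /\ (forall v w, C v -> C w -> C (add3 v w)) /\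
  (forall a v, C v -> C (scal3 a v)).

Definition admissible_surface (eps : R) (u : pt2 -> vec3) (Rset : pt2 -> Prop)
    (S : vec3 -> Prop) : Prop :=
  (~ is_subspace (cone eps u Rset) /\
   forall z, S z <-> exists l v, admissible_list (values eps u Rset) l /\
       coef_sum l > 0 /\ v = comb l /\ v <> zero3 /\ z = scal3 (/ norm3 v) v)
  \/
  (is_subspace (cone eps u Rset) /\
   exists h, on_sphere h /\ (forall c, cone eps u Rset c -> dot3 h c = 0) /\
   forall z, S z <-> exists l tau v, admissible_list (values eps u Rset) l /\
       0 <= tau /\ coef_sum l + tau > 0 /\ v = add3 (comb l) (scal3 tau h) /\
       v <> zero3 /\ z = scal3 (/ norm3 v) v).

Definition bounded2 (Omega : pt2 -> Prop) : Prop :=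
  exists M, forall x, Omega x -> dist2 x (0, 0) <= M.
Definition open2 (Omega : pt2 -> Prop) : Prop :=
  forall x, Omega x -> exists r, r > 0 /\ forall y, dist2 x y < r -> Omega y.

(* Main.v *)
Require Import Defs.
From Stdlib Require Import Reals Lra Lia List Classical Relations ZArith.
Open Scope R_scope.

Lemma pair_eq (a b c d e f : R) : a = d -> b = e -> c = f -> (a, b, c) = (d, e, f).
Proof. intros; subst; reflexivity. Qed.

Ltac dv := repeat match goal with
  | v : vec3 |- _ => let x := fresh "x" in let y := fresh "y" in let z := fresh "z" in destruct v as [[x y] z]
  | v : (R * R * R)%type |- _ => let x := fresh "x" in let y := fresh "y" in let z := fresh "z" in destruct v as [[x y] z]
  end; unfold add3, scal3, zero3, dot3, opp3, nvec in *; simpl in *.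

Fixpoint lc (lam : nat -> R) (W : list vec3) : vec3 :=
  match W with nil => zero3 | w :: W' => add3 (scal3 (lam O) w) (lc (fun k => lam (S k)) W') end.
Fixpoint ls (lam : nat -> R) (n : nat) : R :=
  match n with O => 0 | S n' => lam O + ls (fun k => lam (S k)) n' end.
Definition nrm (v : vec3) : R := dot3 v v.
Definition indf (j : nat) : nat -> R := fun k => if Nat.eqb k j then 1 else 0.

Lemma lc_ext W : forall f g, (forall k, (k < length W)%nat -> f k = g k) -> lc f W = lc g W.
Proof.
  induction W as [|w W IH]; intros f g H; simpl; auto.
  rewrite (H O) by (simpl; lia). rewrite (IH (fun k => f (S k)) (fun k => g (S k))); auto.
  intros k Hk; apply H; simpl; lia.
Qed.

Lemma ls_ext n : forall f g, (forall k, (k < n)%nat -> f k = g k) -> ls f n = ls g n.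
Proof.
  induction n as [|n IH]; intros f g H; simpl; auto.
  rewrite (H O) by lia. rewrite (IH (fun k => f (S k)) (fun k => g (S k))); auto.
  intros k Hk; apply H; lia.
Qed.

Lemma lc_lin W : forall a b f g,
  lc (fun k => a * f k + b * g k) W = add3 (scal3 a (lc f W)) (scal3 b (lc g W)).
Proof.
  induction W as [|w W IH]; intros a b f g; simpl.
  - apply pair_eq; ring.
  - rewrite (IH a b (fun k => f (S k)) (fun k => g (S k))).
    generalize (lc (fun k => f (S k)) W) (lc (fun k => g (S k)) W); intros.
    dv. apply pair_eq; ring.
Qed.

Lemma ls_lin n : forall a b f g,
  ls (fun k => a * f k + b * g k) n = a * ls f n + b * ls g n.
Proof.
  induction n as [|n IH]; intros a b f g; simpl.
  - ring.
  - rewrite (IH a b (fun k => f (S k)) (fun k => g (S k))). ring.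
Qed.

Lemma lc_zero W : forall f, (forall k, f k = 0) -> lc f W = zero3.
Proof.
  induction W as [|w W IH]; intros f H; simpl; auto.
  rewrite IH by auto. rewrite H. dv. apply pair_eq; ring.
Qed.

Lemma ls_zero n : forall f, (forall k, f k = 0) -> ls f n = 0.
Proof.
  induction n as [|n IH]; intros f H; simpl; auto.
  rewrite IH by auto. rewrite H. ring.
Qed.

Lemma lc_ind W : forall j, (j < length W)%nat -> lc (indf j) W = nth j W zero3.
Proof.
  induction W as [|w W IH]; intros j Hj; simpl in *; [lia|].
  destruct j as [|j].
  - rewrite lc_zero. unfold indf; simpl. dv; apply pair_eq; ring.
    intros k; unfold indf; simpl; auto.
  - replace (lc (fun k => indf (S j) (S k)) W) with (lc (indf j) W) by reflexivity.
    rewrite IH by lia. unfold indf at 1; simpl.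
    generalize (nth j W zero3); intros. dv. apply pair_eq; ring.
Qed.

Lemma ls_ind n : forall j, (j < n)%nat -> ls (indf j) n = 1.
Proof.
  induction n as [|n IH]; intros j Hj; simpl in *; [lia|].
  destruct j as [|j].
  - rewrite ls_zero. unfold indf; simpl; ring. intros k; unfold indf; simpl; auto.
  - replace (ls (fun k => indf (S j) (S k)) n) with (ls (indf j) n) by reflexivity.
    rewrite IH by lia. unfold indf; simpl. ring.
Qed.

Lemma ls_le n : forall f, (forall k, 0 <= f k) -> forall k, (k < n)%nat -> f k <= ls f n.
Proof.
  induction n as [|n IH]; intros f H k Hk; simpl; [lia|].
  assert (0 <= ls (fun k => f (S k)) n).
  { clear IH Hk. revert f H. induction n; intros f H; simpl; [lra|].
    assert (H0 : forall k, 0 <= f (S k)) by (intro; apply H).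
    specialize (IHn (fun k => f (S k)) H0). pose proof (H0 O). cbv beta in *. lra. }
  destruct k as [|k]. specialize (H O). lra.
  specialize (IH (fun k => f (S k)) (fun k => H (S k)) k ltac:(lia)). specialize (H O). cbv beta in *. lra.
Qed.

Lemma ls_pos_ex n : forall f, ls f n > 0 -> exists k, (k < n)%nat /\ f k > 0.
Proof.
  induction n as [|n IH]; intros f H; simpl in *; [lra|].
  destruct (Rlt_dec 0 (f O)). exists O; split; [lia|lra].
  destruct (IH (fun k => f (S k))) as [k [Hk Hf]]. lra.
  exists (S k); split; [lia|auto].
Qed.

Definition MinProp := forall W : list vec3, W <> nil -> exists lam : nat -> R,
  (forall k, 0 <= lam k) /\ ls lam (length W) = 1 /\
  forall lam', (forall k, 0 <= lam' k) -> ls lam' (length W) = 1 ->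
     nrm (lc lam W) <= nrm (lc lam' W).

Definition coneL (W : list vec3) (v : vec3) : Prop :=
  exists l, Forall (fun p => 0 <= fst p /\ In (snd p) W) l /\ v = comb l.

Lemma comb_app l1 l2 : comb (l1 ++ l2) = add3 (comb l1) (comb l2).
Proof.
  induction l1 as [|[a x] l1 IH]; simpl.
  - generalize (comb l2); intros; dv; apply pair_eq; ring.
  - rewrite IH. generalize (comb l1) (comb l2); intros; dv; apply pair_eq; ring.
Qed.

Lemma coneL_zero W : coneL W zero3.
Proof. exists nil; split; auto. Qed.

Lemma coneL_add W a b : coneL W a -> coneL W b -> coneL W (add3 a b).
Proof.
  intros [l1 [H1 E1]] [l2 [H2 E2]]. exists (l1 ++ l2); split.
  - apply Forall_app; auto.
  - subst; symmetry; apply comb_app.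
Qed.

Lemma coneL_scal W c a : 0 <= c -> coneL W a -> coneL W (scal3 c a).
Proof.
  intros Hc [l [H E]]. exists (map (fun p => (c * fst p, snd p)) l); split.
  - clear E. induction H as [|[b x] l [Hb Hx] Hl IH]; simpl; constructor; auto.
    simpl; split; auto. apply Rmult_le_pos; auto.
  - subst. induction l as [|[b x] l IH]; simpl.
    + apply pair_eq; ring.
    + inversion H; subst. rewrite <- IH by auto.
      generalize (comb l); intros; dv; apply pair_eq; ring.
Qed.

Lemma coneL_gen W w : In w W -> coneL W w.
Proof.
  intros H. exists ((1, w) :: nil); split.
  - constructor; simpl; auto. split; auto; lra.
  - simpl. dv; apply pair_eq; ring.
Qed.

Lemma coneL_sub W W' v : (forall x, In x W' -> coneL W x) -> coneL W' v -> coneL W v.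
Proof.
  intros HS [l [H E]]. subst. induction H as [|[a x] l Hx Hl IH]; simpl.
  - apply coneL_zero.
  - simpl in Hx. destruct Hx. apply coneL_add; auto. apply coneL_scal; auto.
Qed.

Lemma dot_lin_r p a x r : dot3 p (add3 (scal3 a x) r) = a * dot3 p x + dot3 p r.
Proof. dv; ring. Qed.
Lemma dot_lin_l y a x r : dot3 (add3 (scal3 a x) r) y = a * dot3 x y + dot3 r y.
Proof. dv; ring. Qed.

Lemma coneL_dot W p v : (forall x, In x W -> 0 <= dot3 p x) -> coneL W v -> 0 <= dot3 p v.
Proof.
  intros HS [l [H E]]. subst. induction H as [|[a x] l Hx Hl IH]; simpl.
  - dv; lra.
  - simpl in Hx. destruct Hx as [Ha Hx]. specialize (HS x Hx).
    rewrite dot_lin_r. simpl in Ha. assert (0 <= a * dot3 p x) by (apply Rmult_le_pos; auto). lra.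
Qed.

Lemma coneL_orth W y v : (forall x, In x W -> dot3 x y = 0) -> coneL W v -> dot3 v y = 0.
Proof.
  intros HS [l [H E]]. subst. induction H as [|[a x] l Hx Hl IH]; simpl.
  - dv; lra.
  - simpl in Hx. destruct Hx as [Ha Hx]. specialize (HS x Hx).
    rewrite dot_lin_l, HS, IH; ring.
Qed.

Lemma coneL_lc W : forall lam, (forall k, 0 <= lam k) -> coneL (W) (lc lam W).
Proof.
  induction W as [|w W IH]; intros lam H; simpl.
  - apply coneL_zero.
  - apply coneL_add. apply coneL_scal; auto. apply coneL_gen; simpl; auto.
    apply (coneL_sub _ W). intros x Hx; apply coneL_gen; simpl; auto.
    apply IH; auto.
Qed.

Lemma coneL_neg W v : (forall x, In x W -> coneL W (opp3 x)) -> coneL W v -> coneL W (opp3 v).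
Proof.
  intros HS [l [H E]]. subst. induction H as [|[a x] l Hx Hl IH]; simpl.
  - exists nil; split; auto. simpl. apply pair_eq; ring.
  - simpl in Hx. destruct Hx as [Ha Hx].
    replace (opp3 (add3 (scal3 a x) (comb l))) with (add3 (scal3 a (opp3 x)) (opp3 (comb l)))
      by (generalize (comb l); intros; dv; apply pair_eq; ring).
    apply coneL_add; auto. apply coneL_scal; auto.
Qed.

Lemma nrm_nonneg v : 0 <= nrm v.
Proof. unfold nrm; dv; nra. Qed.

Lemma nrm_pos v : v <> zero3 -> 0 < nrm v.
Proof.
  intros H. unfold nrm. destruct (Rlt_dec 0 (dot3 v v)); auto. exfalso; apply H.
  dv. assert (x = 0) by nra. assert (y = 0) by nra. assert (z = 0) by nra. subst; auto.
Qed.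

Lemma scalar_lemma A B : 0 <= B -> (forall t, 0 < t <= 1 -> 0 <= 2 * t * A + t * t * B) -> 0 <= A.
Proof.
  intros HB H. destruct (Rle_dec 0 A) as [|HA]; auto. exfalso.
  destruct (Rle_dec B (-A)).
  - specialize (H 1 ltac:(lra)). lra.
  - assert (HB' : 0 < B) by lra.
    specialize (H (-A / B)).
    assert (0 < -A / B <= 1).
    { split. apply Rdiv_lt_0_compat; lra.
      apply (Rmult_le_reg_r B); auto. unfold Rdiv. rewrite Rmult_assoc, Rinv_l by lra. lra. }
    specialize (H H0).
    replace (2 * (- A / B) * A + - A / B * (- A / B) * B) with (- (A * A) / B) in H by (field; lra).
    assert (0 < A * A / B) by (apply Rdiv_lt_0_compat; nra).
    unfold Rdiv in *. lra.
Qed.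

Lemma indf_nonneg j k : 0 <= indf j k.
Proof. unfold indf; destruct (Nat.eqb k j); lra. Qed.

Lemma var_step W lam : (forall k, 0 <= lam k) -> ls lam (length W) = 1 ->
  (forall lam', (forall k, 0 <= lam' k) -> ls lam' (length W) = 1 ->
     nrm (lc lam W) <= nrm (lc lam' W)) ->
  forall j, (j < length W)%nat -> nrm (lc lam W) <= dot3 (lc lam W) (nth j W zero3).
Proof.
  intros Hnn Hs Hmin j Hj.
  set (p := lc lam W). set (w := nth j W zero3).
  enough (0 <= dot3 p w - nrm p) by lra.
  apply (scalar_lemma _ (nrm (add3 w (opp3 p)))). apply nrm_nonneg.
  intros t Ht.
  specialize (Hmin (fun k => (1 - t) * lam k + t * indf j k)).
  rewrite ls_lin, lc_lin, lc_ind, ls_ind, Hs in Hmin by auto.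
  assert (nrm p <= nrm (add3 (scal3 (1 - t) p) (scal3 t w))).
  { apply Hmin. intros k. pose proof (Hnn k). pose proof (indf_nonneg j k). nra. ring. }
  fold p w in H. unfold nrm in *. revert H. generalize p w; intros; dv. nra.
Qed.

Lemma coneL_drop0 W W' v : (forall x, In x W -> x = zero3 \/ In x W') -> coneL W v -> coneL W' v.
Proof.
  intros HS [l [H E]]. subst. induction H as [|[a x] l Hx Hl IH]; simpl.
  - apply coneL_zero.
  - simpl in Hx. destruct Hx as [Ha Hx]. destruct (HS x Hx) as [Hz|Hz].
    + subst. replace (add3 (scal3 a zero3) (comb l)) with (comb l) by
        (generalize (comb l); intros; dv; apply pair_eq; ring). auto.
    + apply coneL_add; auto. apply coneL_scal; auto. apply coneL_gen; auto.
Qed.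

Lemma dot_pi a b c : dot3 (add3 a (scal3 c b)) b = dot3 a b + c * nrm b.
Proof. unfold nrm; dv; ring. Qed.
Lemma dot_pi2 p a b c : dot3 p (add3 a (scal3 c b)) = dot3 p a + c * dot3 p b.
Proof. dv; ring. Qed.

Lemma coneB (MP : MinProp) : forall n W, (length W <= n)%nat ->
  (exists w, In w W /\ ~ coneL W (opp3 w)) ->
  exists p, coneL W p /\ p <> zero3 /\ forall w, In w W -> 0 <= dot3 p w.
Proof.
  induction n as [|n IHn]; intros W HL [w0 [Hin Hn]].
  { destruct W; simpl in *; [contradiction | lia]. }
  destruct (classic (In zero3 W)) as [Hz|Hz].
  - apply in_split in Hz as [W1 [W2 HW]].
    assert (Hsub : forall x, In x W -> x = zero3 \/ In x (W1 ++ W2)).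
    { intros x Hx. rewrite HW in Hx. apply in_app_or in Hx. simpl in Hx.
      destruct Hx as [Hx|[Hx|Hx]]; auto; right; apply in_or_app; auto. }
    assert (Hsub2 : forall x, In x (W1 ++ W2) -> coneL W x).
    { intros x Hx. apply coneL_gen. rewrite HW. apply in_app_or in Hx.
      apply in_or_app. simpl. tauto. }
    assert (Hw0 : w0 <> zero3).
    { intros E; subst w0. apply Hn. replace (opp3 zero3) with zero3 by (dv; apply pair_eq; ring).
      apply coneL_zero. }
    destruct (IHn (W1 ++ W2)) as [p [Hp1 [Hp2 Hp3]]].
    + rewrite HW in HL. rewrite length_app in *. simpl in HL. lia.
    + exists w0. split.
      * destruct (Hsub w0 Hin); [contradiction|auto].
      * intros Hc. apply Hn. apply (coneL_sub _ (W1 ++ W2)); auto.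
    + exists p. split; [|split]; auto.
      * apply (coneL_sub _ (W1 ++ W2)); auto.
      * intros w Hw. destruct (Hsub w Hw) as [E|E]; auto. subst. dv; lra.
  - assert (HWn : W <> nil) by (intros E; subst; contradiction).
    destruct (MP W HWn) as [lam [Hnn [Hs Hmin]]].
    set (p := lc lam W).
    destruct (classic (p = zero3)) as [Hp0|Hp0].
    + destruct (ls_pos_ex (length W) lam) as [j [Hj Hlj]]. rewrite Hs; lra.
      set (w1 := nth j W zero3).
      assert (Hw1 : In w1 W) by (apply nth_In; auto).
      assert (Hw1z : w1 <> zero3) by (intros E; rewrite E in Hw1; contradiction).
      assert (Hneg1 : coneL W (opp3 w1)).
      { set (lam' := fun k => 1 * lam k + (- lam j) * indf j k).
        assert (Hl' : forall k, 0 <= lam' k).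
        { intros k. unfold lam', indf. destruct (Nat.eqb k j) eqn:E.
          - apply Nat.eqb_eq in E; subst; lra.
          - pose proof (Hnn k); lra. }
        assert (E : lc lam' W = add3 (scal3 1 p) (scal3 (- lam j) w1)).
        { unfold lam'. rewrite lc_lin, lc_ind by auto. reflexivity. }
        replace (opp3 w1) with (scal3 (/ lam j) (lc lam' W)).
        - apply coneL_scal. left; apply Rinv_0_lt_compat; lra. apply coneL_lc; auto.
        - rewrite E, Hp0. clearbody w1. dv. apply pair_eq; field; lra. }
      assert (Hsc : forall c, coneL W (scal3 c w1)).
      { intros c. destruct (Rle_dec 0 c).
        - apply coneL_scal; auto. apply coneL_gen; auto.
        - replace (scal3 c w1) with (scal3 (- c) (opp3 w1)) by (dv; apply pair_eq; ring).
          apply coneL_scal; auto. lra. }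
      pose proof (nrm_pos w1 Hw1z) as Hq.
      apply in_split in Hw1 as [W1 [W2 HW]].
      set (pi := fun v => add3 v (scal3 (- (dot3 v w1 / nrm w1)) w1)).
      set (W' := map pi (W1 ++ W2)).
      assert (HinW : forall v, In v (W1 ++ W2) -> In v W).
      { intros v Hv. rewrite HW. apply in_app_or in Hv. apply in_or_app. simpl. tauto. }
      assert (HW'sub : forall x, In x W' -> coneL W x).
      { intros x Hx. unfold W' in Hx. apply in_map_iff in Hx as [v [E Hv]]. subst x.
        unfold pi. apply coneL_add. apply coneL_gen; auto. apply Hsc. }
      assert (Horth : forall x, In x W' -> dot3 x w1 = 0).
      { intros x Hx. unfold W' in Hx. apply in_map_iff in Hx as [v [E Hv]]. subst x.
        unfold pi. rewrite dot_pi. field. lra. }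
      destruct (IHn W') as [p' [Hp1 [Hp2 Hp3]]].
      * unfold W'. rewrite length_map. rewrite HW in HL. rewrite length_app in *. simpl in HL. lia.
      * apply NNPP. intros Hall.
        assert (Hall' : forall x, In x W' -> coneL W' (opp3 x)).
        { intros x Hx. apply NNPP. intros Hc. apply Hall. exists x; auto. }
        apply Hn.
        assert (HallW : forall w, In w W -> coneL W (opp3 w)).
        { intros w Hw. rewrite HW in Hw. apply in_app_or in Hw. simpl in Hw.
          destruct (classic (w = w1)) as [E|E]. rewrite E; auto.
          assert (Hw' : In w (W1 ++ W2)) by (apply in_or_app; destruct Hw as [H0|[H0|H0]]; auto; congruence).
          replace (opp3 w) with (add3 (opp3 (pi w)) (scal3 (- (dot3 w w1 / nrm w1)) w1)).
          - apply coneL_add; auto. apply (coneL_sub _ W'); auto. apply Hall'.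
            unfold W'; apply in_map; auto.
          - unfold pi. generalize (- (dot3 w w1 / nrm w1)); intros. dv. apply pair_eq; ring. }
        apply HallW; auto.
      * exists p'. split; [|split]; auto.
        -- apply (coneL_sub _ W'); auto.
        -- assert (Ho : dot3 p' w1 = 0) by (apply (coneL_orth W'); auto).
           intros w Hw. destruct (classic (w = w1)) as [E|E].
           ++ rewrite E; lra.
           ++ rewrite HW in Hw. apply in_app_or in Hw. simpl in Hw.
              assert (Hw' : In w (W1 ++ W2)) by (apply in_or_app; destruct Hw as [H0|[H0|H0]]; auto; congruence).
              specialize (Hp3 (pi w) ltac:(unfold W'; apply in_map; auto)).
              unfold pi in Hp3. rewrite dot_pi2, Ho in Hp3. lra.
    + exists p. split; [|split]; auto.
      * apply coneL_lc; auto.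
      * intros w Hw. destruct (In_nth W w zero3 Hw) as [j [Hj E]].
        rewrite <- E. pose proof (var_step W lam Hnn Hs Hmin j Hj).
        pose proof (nrm_nonneg p). fold p in H. lra.
Qed.

Lemma comp_le_dist x y : Rabs (fst x - fst y) <= dist2 x y /\ Rabs (snd x - snd y) <= dist2 x y.
Proof.
  unfold dist2. split.
  - rewrite <- sqrt_Rsqr_abs. apply sqrt_le_1_alt. unfold Rsqr. simpl. generalize (fst x - fst y) (snd x - snd y); intros; nra.
  - rewrite <- sqrt_Rsqr_abs. apply sqrt_le_1_alt. unfold Rsqr. simpl. generalize (fst x - fst y) (snd x - snd y); intros; nra.
Qed.

Lemma tri_bound eps T : is_triangle eps T -> exists p, T p /\
  forall x, T x -> Rabs (fst x - fst p) <= eps /\ Rabs (snd x - snd p) <= eps.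
Proof.
  intros [p [q [r [_ [_ [_ [Hpq [Hqr [Hpr HT]]]]]]]]].
  exists p. split.
  - apply HT. exists 1, 0, 0. repeat split; try lra. destruct p; simpl; f_equal; ring.
  - intros x Hx. apply HT in Hx as [l1 [l2 [l3 [H1 [H2 [H3 [Hs E]]]]]]].
    destruct (comp_le_dist p q) as [A1 A2]. destruct (comp_le_dist p r) as [B1 B2].
    rewrite Hpq in A1, A2. rewrite Hpr in B1, B2.
    subst x; simpl.
    replace l1 with (1 - l2 - l3) by lra.
    split.
    + replace ((1 - l2 - l3) * fst p + l2 * fst q + l3 * fst r - fst p)
        with (l2 * (fst q - fst p) + l3 * (fst r - fst p)) by ring.
      eapply Rle_trans. apply Rabs_triang. rewrite !Rabs_mult, (Rabs_right l2), (Rabs_right l3) by lra.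
      assert (Rabs (fst q - fst p) = Rabs (fst p - fst q)) by (rewrite <- Rabs_Ropp; f_equal; ring).
      assert (Rabs (fst r - fst p) = Rabs (fst p - fst r)) by (rewrite <- Rabs_Ropp; f_equal; ring).
      rewrite H, H0.
      match goal with |- l2 * ?X + l3 * ?Y <= _ => 
        assert (l2 * X <= l2 * eps) by (apply Rmult_le_compat_l; lra);
        assert (l3 * Y <= l3 * eps) by (apply Rmult_le_compat_l; lra) end.
      assert (0 <= eps) by (rewrite <- Hpq; apply sqrt_pos). nra.
    + replace ((1 - l2 - l3) * snd p + l2 * snd q + l3 * snd r - snd p)
        with (l2 * (snd q - snd p) + l3 * (snd r - snd p)) by ring.
      eapply Rle_trans. apply Rabs_triang. rewrite !Rabs_mult, (Rabs_right l2), (Rabs_right l3) by lra.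
      assert (Rabs (snd q - snd p) = Rabs (snd p - snd q)) by (rewrite <- Rabs_Ropp; f_equal; ring).
      assert (Rabs (snd r - snd p) = Rabs (snd p - snd r)) by (rewrite <- Rabs_Ropp; f_equal; ring).
      rewrite H, H0.
      match goal with |- l2 * ?X + l3 * ?Y <= _ => 
        assert (l2 * X <= l2 * eps) by (apply Rmult_le_compat_l; lra);
        assert (l3 * Y <= l3 * eps) by (apply Rmult_le_compat_l; lra) end.
      assert (0 <= eps) by (rewrite <- Hpq; apply sqrt_pos). nra.
Qed.

Lemma neighbour_omega eps Omega u T1 T2 : spin_field eps Omega u ->
  neighbours eps u T1 T2 -> exists y, T1 y /\ Omega y.
Proof.
  intros Hsf [_ [_ [i [j [[Hi [Hj [_ Hu]]] HS]]]]].
  assert (T1 i). { apply (proj2 (HS i)). exists 0. split; [lra|]. destruct i, j; simpl; f_equal; ring. }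
  assert (T1 j). { apply (proj2 (HS j)). exists 1. split; [lra|]. destruct i, j; simpl; f_equal; ring. }
  destruct (classic (Omega i)). exists i; auto.
  destruct (classic (Omega j)). exists j; auto.
  exfalso. rewrite (proj2 (Hsf i Hi) H1), (proj2 (Hsf j Hj) H2) in Hu.
  unfold nvec, opp3, scal3 in Hu. injection Hu. lra.
Qed.

Lemma clos_first (A : Type) (Rl : A -> A -> Prop) a b : clos_trans A Rl a b -> exists c, Rl a c.
Proof. induction 1; eauto. Qed.

Lemma bound_Rset eps Omega u Rset : eps > 0 -> bounded2 Omega -> spin_field eps Omega u ->
  pc_union eps u Rset -> exists K, forall x, Rset x -> Rabs (fst x) <= K /\ Rabs (snd x) <= K.
Proof.
  intros Heps [M HM] Hsf [F [HF1 [HF2 HR]]].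
  destruct (classic (exists T0, F T0)) as [[T0 HT0]|Hno].
  2:{ exists 0. intros x Hx. apply HR in Hx as [T [HT _]]. exfalso; eauto. }
  destruct (classic (forall T, F T -> T = T0)) as [Hall|Hex].
  - destruct (tri_bound eps T0 (HF1 T0 HT0)) as [p [_ Hp]].
    exists (Rabs (fst p) + Rabs (snd p) + eps). intros x Hx.
    apply HR in Hx as [T [HT Hx]]. rewrite (Hall T HT) in Hx. destruct (Hp x Hx) as [A B].
    pose proof (Rabs_triang (fst x - fst p) (fst p)). pose proof (Rabs_triang (snd x - snd p) (snd p)).
    replace (fst x - fst p + fst p) with (fst x) in * by ring.
    replace (snd x - snd p + snd p) with (snd x) in * by ring.
    pose proof (Rabs_pos (fst p)); pose proof (Rabs_pos (snd p)). split; lra.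
  - apply not_all_ex_not in Hex as [T1 HT1]. apply imply_to_and in HT1 as [HT1 HT1'].
    assert (Hom : forall T, F T -> exists y, T y /\ Omega y).
    { intros T HT. destruct (classic (T = T0)) as [E|E].
      - subst T. destruct (clos_first _ _ _ _ (HF2 T0 T1 HT0 HT1 (fun e => HT1' (eq_sym e)))) as [c Hc].
        eapply neighbour_omega; eauto.
      - destruct (clos_first _ _ _ _ (HF2 T T0 HT HT0 E)) as [c Hc].
        eapply neighbour_omega; eauto. }
    exists (M + 2 * eps). intros x Hx. apply HR in Hx as [T [HT Hx]].
    destruct (Hom T HT) as [y [Hy Hoy]].
    destruct (tri_bound eps T (HF1 T HT)) as [p [_ Hp]].
    destruct (Hp x Hx) as [A1 A2]. destruct (Hp y Hy) as [B1 B2].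
    specialize (HM y Hoy). destruct (comp_le_dist y (0,0)) as [C1 C2]. simpl in C1, C2.
    rewrite Rminus_0_r in C1, C2.
    assert (forall a b c d : R, Rabs (a - c) <= eps -> Rabs (b - c) <= eps -> Rabs b <= d -> Rabs a <= d + 2 * eps).
    { intros a b c d H1 H2 H3. 
      pose proof (Rabs_triang (a - c) (c - b)). pose proof (Rabs_triang (a - c + (c - b)) b).
      replace (a - c + (c - b) + b) with a in H0 by ring.
      rewrite <- Rabs_Ropp in H2. replace (- (b - c)) with (c - b) in H2 by ring. lra. }
    split; eapply H; eauto; lra.
Qed.

Definition Zrange (N : nat) : list Z :=
  map (fun k => (Z.of_nat k - Z.of_nat N)%Z) (seq 0 (2 * N + 1)).

Lemma Zrange_in N a : (- Z.of_nat N <= a <= Z.of_nat N)%Z -> In a (Zrange N).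
Proof.
  intros H. unfold Zrange. apply in_map_iff. exists (Z.to_nat (a + Z.of_nat N)).
  split. rewrite Z2Nat.id by lia. lia.
  apply in_seq. lia.
Qed.

Lemma Zbound (a : Z) (M : R) : Rabs (IZR a) <= M ->
  (- Z.of_nat (Z.to_nat (up M)) <= a <= Z.of_nat (Z.to_nat (up M)))%Z.
Proof.
  intros H. destruct (archimed M) as [H1 _].
  assert (IZR a < IZR (up M)) by (pose proof (Rle_abs (IZR a)); lra).
  assert (IZR (- a) < IZR (up M)) by (rewrite opp_IZR; pose proof (Rle_abs (- IZR a)); rewrite Rabs_Ropp in H2; lra).
  apply lt_IZR in H0. apply lt_IZR in H2. lia.
Qed.

Lemma lattice_finite eps K : eps > 0 -> exists P : list pt2, forall x, in_lattice eps x ->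
  Rabs (fst x) <= K -> Rabs (snd x) <= K -> In x P.
Proof.
  intros Heps.
  set (N := Z.to_nat (up (2 * K / eps))).
  set (pt := fun a b : Z => (eps * (IZR a * 1 + IZR b * (1 / 2)), eps * (IZR a * 0 + IZR b * (sqrt 3 / 2)))).
  exists (flat_map (fun a => map (fun b => pt a b) (Zrange N)) (Zrange N)).
  intros x [a [b E]] H1 H2. subst x. simpl in H1, H2.
  apply in_flat_map. exists a. split.
  2:{ apply in_map_iff. exists b. split; [reflexivity|]. apply Zrange_in.
    unfold N. apply Zbound.
    assert (Hs : 1 <= sqrt 3) by (rewrite <- sqrt_1; apply sqrt_le_1_alt; lra).
    assert (Hb : eps * Rabs (IZR b) <= 2 * K).
    { revert H2. unfold Rabs. repeat destruct Rcase_abs; intros; nra. }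
    apply (Rmult_le_reg_l eps); auto. replace (eps * (2 * K / eps)) with (2 * K) by (field; lra). lra. }
  - apply Zrange_in. unfold N. apply Zbound.
    assert (Hs : 1 <= sqrt 3) by (rewrite <- sqrt_1; apply sqrt_le_1_alt; lra).
    assert (Hb : eps * Rabs (IZR b) <= 2 * K).
    { revert H2. unfold Rabs. repeat destruct Rcase_abs; intros; nra. }
    assert (Ha : eps * Rabs (IZR a) <= 2 * K).
    { revert H1 Hb. unfold Rabs. repeat destruct Rcase_abs; intros; nra. }
    apply (Rmult_le_reg_l eps); auto. replace (eps * (2 * K / eps)) with (2 * K) by (field; lra). lra.
Qed.

Lemma filter_list (V : vec3 -> Prop) L : (forall w, V w -> In w L) -> exists W, forall w, V w <-> In w W.
Proof.
  revert V. induction L as [|a L IH]; intros V H.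
  - exists nil. intros w; split; [apply H|intros []].
  - destruct (IH (fun w => V w /\ w <> a)) as [W HW].
    { intros w [Hw Hne]. destruct (H w Hw); [congruence|auto]. }
    destruct (classic (V a)).
    + exists (a :: W). intros w; split.
      * intros Hw. destruct (classic (w = a)). subst; left; auto. right; apply HW; auto.
      * intros [E|Hw]. subst; auto. apply HW; auto.
    + exists W. intros w; split.
      * intros Hw. apply HW. split; auto. intros E; subst; contradiction.
      * intros Hw. apply HW; auto.
Qed.

Lemma values_finite eps Omega u Rset : eps > 0 -> bounded2 Omega -> spin_field eps Omega u ->
  is_region eps u Rset -> exists W, forall w, values eps u Rset w <-> In w W.
Proof.
  intros Heps Hb Hsf [Hpc _].
  destruct (bound_Rset eps Omega u Rset Heps Hb Hsf Hpc) as [K HK].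
  destruct (lattice_finite eps K Heps) as [P HP].
  apply (filter_list _ (map u P)).
  intros w [x [Hx [HR E]]]. subst. apply in_map. destruct (HK x HR). apply HP; auto.
Qed.

Lemma cone_equiv eps u Rset W : (forall w, values eps u Rset w <-> In w W) ->
  forall v, cone eps u Rset v <-> coneL W v.
Proof.
  intros HW v; split; intros [l [H E]]; exists l; split; auto;
  (eapply Forall_impl; [|exact H]); intros [a x] [Ha Hx]; split; auto; apply HW; auto.
Qed.

Lemma coef_pos l : Forall (fun p => 0 <= fst p) l -> comb l <> zero3 -> coef_sum l > 0.
Proof.
  intros H Hc.
  assert (A : 0 <= coef_sum l /\ (coef_sum l = 0 -> comb l = zero3)).
  { clear Hc. induction H as [|[a x] l Ha Hl IH]; simpl in *.
    - split; auto; lra.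
    - destruct IH as [I1 I2]. split. lra. intros E.
      rewrite I2 by lra. replace a with 0 by lra. dv; apply pair_eq; ring. }
  destruct A as [A1 A2]. destruct (Rle_lt_or_eq_dec 0 (coef_sum l) A1); [lra|].
  exfalso; apply Hc; auto.
Qed.

Lemma norm3_pos v : v <> zero3 -> 0 < norm3 v.
Proof. intros H. unfold norm3. apply sqrt_lt_R0. apply (nrm_pos v H). Qed.

Lemma dot_scal a b p v : dot3 (scal3 a p) (scal3 b v) = a * b * dot3 p v.
Proof. dv; ring. Qed.

Lemma norm_unit v : v <> zero3 -> norm3 (scal3 (/ norm3 v) v) = 1.
Proof.
  intros H. pose proof (nrm_pos v H). unfold norm3 at 1. rewrite dot_scal.
  fold (nrm v). unfold norm3. fold (nrm v).
  replace (/ sqrt (nrm v) * / sqrt (nrm v) * nrm v) with 1. apply sqrt_1.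
  rewrite <- Rinv_mult, sqrt_sqrt by lra. field. lra.
Qed.

Theorem main_from_min (MP : MinProp) (eps : R) (Omega : pt2 -> Prop) (u : pt2 -> vec3)
  (Rset : pt2 -> Prop) (S : vec3 -> Prop) :
  eps > 0 -> bounded2 Omega -> open2 Omega ->
  spin_field eps Omega u -> is_region eps u Rset ->
  admissible_surface eps u Rset S ->
  exists uR : vec3, on_sphere uR /\ S uR /\ forall z, S z -> dot3 uR z >= 0.
Proof.
  intros Heps Hb Ho Hsf Hreg Hadm.
  destruct Hadm as [[Hns HS] | [Hsub [h [Hh [Horth HS]]]]].
  - destruct (values_finite eps Omega u Rset Heps Hb Hsf Hreg) as [W HW].
    pose proof (cone_equiv eps u Rset W HW) as CE.
    assert (Hex : exists w, In w W /\ ~ coneL W (opp3 w)).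
    { apply NNPP. intros Hno. apply Hns.
      assert (Hall : forall w, In w W -> coneL W (opp3 w)).
      { intros w Hw. apply NNPP. intros Hc. apply Hno. eauto. }
      split; [|split].
      - apply CE. apply coneL_zero.
      - intros v w Hv Hw. apply CE. apply CE in Hv. apply CE in Hw. apply coneL_add; auto.
      - intros a v Hv. apply CE. apply CE in Hv. destruct (Rle_dec 0 a).
        + apply coneL_scal; auto.
        + replace (scal3 a v) with (scal3 (- a) (opp3 v)) by (dv; apply pair_eq; ring).
          apply coneL_scal. lra. apply coneL_neg; auto. }
    destruct (coneB MP (length W) W (le_n _) Hex) as [p [Hp1 [Hp2 Hp3]]].
    exists (scal3 (/ norm3 p) p). split; [|split].
    + apply norm_unit; auto.
    + apply HS. destruct Hp1 as [l [Hl E]]. exists l, p. split; [|split; [|split; [|split]]]; auto.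
      * eapply Forall_impl; [|exact Hl]. intros [a x] [Ha Hx]; split; auto. apply HW; auto.
      * apply coef_pos. eapply Forall_impl; [|exact Hl]. intros [a x] [Ha Hx]; auto. congruence.
    + intros z Hz. apply HS in Hz as [l [v [Hl [_ [E [Hv Ez]]]]]].
      subst z. rewrite dot_scal.
      assert (Hc : coneL W v) by (apply CE; exists l; auto).
      pose proof (coneL_dot W p v Hp3 Hc).
      pose proof (norm3_pos p Hp2). pose proof (norm3_pos v Hv).
      assert (0 <= / norm3 p * / norm3 v).
      { apply Rmult_le_pos; left; apply Rinv_0_lt_compat; auto. }
      apply Rle_ge. apply Rmult_le_pos; auto.
  - assert (Hhh : dot3 h h = 1).
    { unfold on_sphere, norm3 in Hh. rewrite <- (sqrt_sqrt (dot3 h h)), Hh. ring.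
      dv; nra. }
    assert (Ehv : add3 (comb nil) (scal3 1 h) = h) by (simpl; dv; apply pair_eq; ring).
    assert (Hhz : h <> zero3).
    { intros E. rewrite E in Hhh. unfold zero3, dot3 in Hhh. lra. }
    exists h. split; [|split]; auto.
    + apply HS. exists nil, 1, (add3 (comb nil) (scal3 1 h)).
      split; [constructor|]. split; [lra|]. split; [simpl; lra|]. split; auto.
      rewrite Ehv. split; auto. unfold on_sphere in Hh. rewrite Hh, Rinv_1.
      dv; apply pair_eq; ring.
    + intros z Hz. apply HS in Hz as [l [tau [v [Hl [Htau [_ [E [Hv Ez]]]]]]]].
      subst z v.
      assert (H0 : dot3 h (comb l) = 0) by (apply Horth; exists l; auto).
      assert (dot3 h (scal3 (/ norm3 (add3 (comb l) (scal3 tau h))) (add3 (comb l) (scal3 tau h)))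
        = / norm3 (add3 (comb l) (scal3 tau h)) * (dot3 h (comb l) + tau * dot3 h h)).
      { generalize (/ norm3 (add3 (comb l) (scal3 tau h))) (comb l); intros; dv; ring. }
      rewrite H, H0, Hhh. pose proof (norm3_pos _ Hv).
      apply Rle_ge. apply Rmult_le_pos. left; apply Rinv_0_lt_compat; auto. lra.
Qed.

From Stdlib Require Import Reals Lia.
From HB Require Import structures.
From mathcomp Require Import all_boot all_order all_algebra.
From mathcomp Require Import all_classical all_reals all_analysis.
From mathcomp Require Import Rstruct Rstruct_topology.
Import Order.TTheory GRing.Theory Num.Theory.
Import numFieldNormedType.Exports.
Local Open Scope classical_set_scope.
Local Open Scope ring_scope.

Lemma lc_cont (N : nat) (phi : vec3 -> R)
  (Hadd : forall a b, phi (add3 a b) = phi a + phi b)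
  (Hsc : forall s a, phi (scal3 s a) = s * phi a) (H0 : phi zero3 = 0) :
  forall W (g : nat -> 'I_N),
  continuous (fun v : 'rV[R]_N => phi (lc (fun k => v ord0 (g k)) W)).
Proof.
elim=> [|w W IH] g /=.
  by move=> x; exact: cst_continuous.
have -> : (fun v : 'rV[R]_N => phi (add3 (scal3 (v ord0 (g 0%N)) w)
     (lc (fun k => v ord0 (g k.+1)) W))) =
   (fun v => v ord0 (g 0%N) * phi w + phi (lc (fun k => v ord0 (g k.+1)) W)).
  by apply: funext => v; rewrite Hadd Hsc.
move=> x.
apply: (@continuousD R R^o _ (fun v : 'rV[R]_N => v ord0 (g 0%N) * phi w)
  (fun v => phi (lc (fun k => v ord0 (g k.+1)) W)) x).
  apply: (@continuousM R _ (fun v : 'rV[R]_N => v ord0 (g 0%N)) (fun _ => phi w) x).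
    exact: coord_continuous.
  exact: cst_continuous.
exact: (IH (fun k => g k.+1)).
Qed.

Lemma ls_cont (N : nat) : forall n (g : nat -> 'I_N),
  continuous (fun v : 'rV[R]_N => ls (fun k => v ord0 (g k)) n).
Proof.
elim=> [|n IH] g /=.
  by move=> x; exact: cst_continuous.
move=> x.
apply: (@continuousD R R^o _ (fun v : 'rV[R]_N => v ord0 (g 0%N))
  (fun v => ls (fun k => v ord0 (g k.+1)) n)).
  exact: coord_continuous.
exact: (IH (fun k => g k.+1)).
Qed.

Definition c1 (v : vec3) : R := fst (fst v).
Definition c2 (v : vec3) : R := snd (fst v).
Definition c3 (v : vec3) : R := snd v.

Lemma nrm_cont (N : nat) W (g : nat -> 'I_N) :
  continuous (fun v : 'rV[R]_N => nrm (lc (fun k => v ord0 (g k)) W)).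
Proof.
have E : forall q : vec3, nrm q = c1 q * c1 q + c2 q * c2 q + c3 q * c3 q.
  by move=> [[x y] z].
have C : forall phi : vec3 -> R, 
  (forall a b, phi (add3 a b) = phi a + phi b) ->
  (forall s a, phi (scal3 s a) = s * phi a) -> phi zero3 = 0 ->
  continuous (fun v : 'rV[R]_N => phi (lc (fun k => v ord0 (g k)) W) * phi (lc (fun k => v ord0 (g k)) W)).
  move=> phi H1 H2 H3 x.
  apply: (@continuousM R _ (fun v : 'rV[R]_N => phi (lc (fun k => v ord0 (g k)) W))
     (fun v : 'rV[R]_N => phi (lc (fun k => v ord0 (g k)) W)) x).
    exact: lc_cont.
  exact: lc_cont.
have -> : (fun v : 'rV[R]_N => nrm (lc (fun k => v ord0 (g k)) W)) =
  (fun v => c1 (lc (fun k => v ord0 (g k)) W) * c1 (lc (fun k => v ord0 (g k)) W) +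
            c2 (lc (fun k => v ord0 (g k)) W) * c2 (lc (fun k => v ord0 (g k)) W) +
            c3 (lc (fun k => v ord0 (g k)) W) * c3 (lc (fun k => v ord0 (g k)) W)).
  by apply: funext => v; rewrite E.
move=> x.
apply: (@continuousD R R^o _ (fun v : 'rV[R]_N => c1 (lc (fun k => v ord0 (g k)) W) * c1 (lc (fun k => v ord0 (g k)) W) +
            c2 (lc (fun k => v ord0 (g k)) W) * c2 (lc (fun k => v ord0 (g k)) W))
   (fun v => c3 (lc (fun k => v ord0 (g k)) W) * c3 (lc (fun k => v ord0 (g k)) W))).
  apply: (@continuousD R R^o _ (fun v : 'rV[R]_N => c1 (lc (fun k => v ord0 (g k)) W) * c1 (lc (fun k => v ord0 (g k)) W))
   (fun v => c2 (lc (fun k => v ord0 (g k)) W) * c2 (lc (fun k => v ord0 (g k)) W))).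
    by apply: C => [[[? ?] ?] [[? ?] ?]|? [[? ?] ?]|].
  by apply: C => [[[? ?] ?] [[? ?] ?]|? [[? ?] ?]|].
by apply: C => [[[? ?] ?] [[? ?] ?]|? [[? ?] ?]|].
Qed.

Lemma minprop : MinProp.
Proof.
move=> [|w0 W'] // _.
set W := w0 :: W'.
have LW : length W = (length W').+1 by [].
rewrite LW.
set m := length W'.
pose A := [set v : 'rV[R]_m.+1 | (forall i, 0 <= v ord0 i <= 1) /\
   ls (fun k => v ord0 (inord k)) m.+1 = 1].
pose B := [set v : 'rV[R]_m.+1 | forall i, `[(0:R), 1]%classic (v ord0 i)].
have cB : compact B.
  rewrite /B; apply: (@rV_compact _ m.+1 (fun _ => `[(0:R), 1]%classic)) => _.
  exact: segment_compact.
have clA : closed A.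
  have -> : A = B `&` ((fun v : 'rV[R]_m.+1 => ls (fun k => v ord0 (inord k)) m.+1) @^-1` [set x | x = 1]).
    apply/seteqP; split => v /=.
      by move=> [H1 H2]; split => // i; rewrite /= in_itv /=; apply: H1.
    by move=> [H1 H2]; split => // i; have := H1 i; rewrite /= in_itv.
  apply: closedI.
    apply: compact_closed => //; exact: norm_hausdorff.
  by move: (ls_cont m.+1 m.+1 (fun k => inord k)) => /continuous_closedP; apply; apply: closed_eq.
have cA : compact A.
  apply: (subclosed_compact clA cB).
  by move=> v [H1 _] i /=; rewrite in_itv; apply: H1.
have A0 : A !=set0.
  exists (\row_(i < m.+1) indf 0%N i); split.
    move=> i; rewrite mxE /indf; case: (Nat.eqb _ _) => /=; by rewrite ?ler01 ?lexx.
  rewrite (ls_ext _ _ (indf 0%N)); first by have := ls_ind m.+1 0%N (ltac:(lia)); apply.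
  by move=> k Hk; rewrite mxE inordK //; apply/ssrnat.ltP.
pose f := fun v : 'rV[R]_m.+1 => nrm (lc (fun k => v ord0 (inord k)) W).
have cf : {within A, continuous f}.
  apply: continuous_subspaceT => x; exact: nrm_cont.
have [c cAc cmin] := compact_EVT_min A0 cA cf.
have cA' : A c by rewrite inE in cAc.
exists (fun k => c ord0 (inord k)); split; [|split].
- move=> k; case: cA' => H _; have /andP[+ _] := H (inord k); by move/RleP.
- by case: cA'.
- move=> lam' Hnn Hs.
  pose v' := \row_(i < m.+1) lam' (nat_of_ord i).
  have E : forall k, (k < m.+1)%coq_nat -> v' ord0 (inord k) = lam' k.
    by move=> k Hk; rewrite mxE inordK //; apply/ssrnat.ltP.
  have Av' : A v'.
    split.
      move=> i; rewrite mxE; apply/andP; split; apply/RleP; first exact: Hnn.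
      apply: (Rle_trans _ (ls lam' m.+1)); last by rewrite Hs; apply: Rle_refl.
      apply: ls_le => //; apply/ssrnat.ltP; exact: ltn_ord.
    by rewrite (ls_ext _ _ lam').
  have := cmin v' (mem_set Av').
  rewrite /f (lc_ext _ (fun k => v' ord0 (inord k)) lam') //.
  by move/RleP.
Qed.

Close Scope ring_scope.
Close Scope classical_set_scope.
Open Scope R_scope.

Theorem lemmaB1 (eps : R) (Omega : pt2 -> Prop) (u : pt2 -> vec3)
  (Rset : pt2 -> Prop) (S : vec3 -> Prop) :
  eps > 0 -> bounded2 Omega -> open2 Omega ->
  spin_field eps Omega u -> is_region eps u Rset ->
  admissible_surface eps u Rset S ->
  exists uR : vec3, on_sphere uR /\ S uR /\ forall z, S z -> dot3 uR z >= 0.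
Proof.
  exact (main_from_min minprop eps Omega u Rset S).
Qed.
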